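(* Let $u,l\ge1$, $m=lu$, and let $1\le K\le N$ be integers with $K/N\ge2^{-u}+\frac1N$. Consider any erasure pattern in which the total number $e$ of erased modulation symbols satisfies $e\le (N-K+1)/(1-2^{-u})$. Then under the proportional multiplicity assignment (with any $M>0$) the ASD sufficient condition $S\ge\sqrt{2(K-1)C}$ holds; i.e., ASD under PMAS is guaranteed to decode up to $(N-K+1)/(1-2^{-u})$ erasure events.
   Context: Setting (RS coded modulation over an erasure channel): a Reed–Solomon code of length $N$ and dimension $K$ over $GF(2^m)$ with $m=lu$; each RS symbol is transmitted as $l$ modulation symbols ($2^u$-ary QAM or PSK), each carrying $u$ bits, and the channel erases modulation symbols (''erasure events''). An RS symbol in which $b_j\in\{0,\dots,l\}$ modulation symbols are erased is consistent with $2^{ub_j}$ candidate symbols. The proportional multiplicity assignment (PMAS) gives each such candidate multiplicity $M2^{-ub_j}$; the score is $S=\sum_j M2^{-ub_j}$ and the (approximate) cost is $C=\frac12\sum_j2^{ub_j}(M2^{-ub_j})^2$. *)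

(* Defs.v *)
From mathcomp Require Import all_boot all_order all_algebra.
Set Implicit Arguments. Unset Strict Implicit. Unset Printing Implicit Defensive.
Import Order.TTheory GRing.Theory Num.Theory.
Local Open Scope ring_scope.

(* An erasure pattern for an RS code of length N: b j = number of erased
   modulation symbols (out of l) in RS symbol j.  Each RS symbol carries
   l modulation symbols of u bits each. *)

Definition erasures (N : nat) (b : 'I_N -> nat) : nat := (\sum_(j < N) b j)%N.

Definition pmas_score (R : fieldType) (u N : nat) (M : R) (b : 'I_N -> nat) : R :=
  \sum_(j < N) M * (2%:R ^- (u * b j)).

(* (Approximate) cost: C = 1/2 sum_j 2^{u b_j} (M 2^{-u b_j})^2. *)
Definition pmas_cost (R : fieldType) (u N : nat) (M : R) (b : 'I_N -> nat) : R :=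
  2%:R^-1 * \sum_(j < N) (2%:R ^+ (u * b j)) * (M * 2%:R ^- (u * b j)) ^+ 2.

(* Main.v *)
Require Import Defs.
From mathcomp Require Import all_boot all_order all_algebra.
From mathcomp Require Import lra.
Import Order.TTheory GRing.Theory Num.Theory.
Local Open Scope ring_scope.

Lemma bern (R : realFieldType) (q : R) (n : nat) :
  0 <= q -> q <= 1 -> 1 - n%:R * (1 - q) <= q ^+ n.
Proof.
move=> q0 q1; elim: n => [|n IH]; first by rewrite mul0r subr0 expr0.
rewrite exprS -addn1 natrD.
have h : q * (1 - n%:R * (1 - q)) <= q * q ^+ n by rewrite ler_wpM2l.
have hn : 0 <= n%:R * ((1 - q) * (1 - q)) :> R.
  by apply: mulr_ge0; [rewrite ler0n | apply: mulr_ge0; lra].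
rewrite natr1 in h *.
have e : n%:R + 1 = n.+1%:R :> R by rewrite -natr1.
lra.
Qed.

Theorem theorem3 (R : rcfType) (u l N K : nat) (M : R) (b : 'I_N -> nat) :
  (1 <= u)%N -> (1 <= l)%N -> (1 <= K)%N -> (K <= N)%N ->
  K%:R / N%:R >= 2%:R ^- u + 1 / N%:R :> R ->
  (forall j, (b j <= l)%N) ->
  (erasures b)%:R <= (N - K + 1)%:R / (1 - 2%:R ^- u) :> R ->
  0 < M ->
  Num.sqrt (2%:R * (K%:R - 1) * pmas_cost u M b) <= pmas_score u M b.
Proof.
move=> u1 _ K1 KN _ _ he M0.
set q : R := 2%:R ^- u.
have q0 : 0 < q by rewrite /q invr_gt0 exprn_gt0.
have q1 : q < 1.
  rewrite /q invf_lt1 ?exprn_gt0 //.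
  by rewrite -{1}(expr0 (2%:R : R)) ltr_eXn2l // ltr1n.
have hy : forall j : 'I_N, 2%:R ^- (u * b j) = q ^+ b j :> R.
  by move=> j; rewrite exprM exprVn.
set Y := \sum_(j < N) q ^+ b j.
have hS : pmas_score u M b = M * Y.
  by rewrite /pmas_score mulr_sumr; apply: eq_bigr => j _; rewrite hy.
have hC : pmas_cost u M b = 2%:R^-1 * (M ^+ 2 * Y).
  rewrite /pmas_cost; congr (_ * _); rewrite /Y mulr_sumr; apply: eq_bigr => j _.
  have nz : (2%:R ^+ (u * b j) : R) != 0 by rewrite expf_neq0 // pnatr_eq0.
  rewrite exprMn [X in _ * (_ * X)]expr2 mulrCA; congr (_ * _).
  by rewrite mulrA mulfV // mul1r hy.
have hY : K%:R - 1 <= Y.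
  have h1 : \sum_(j < N) (1 - (b j)%:R * (1 - q)) <= Y.
    by apply: ler_sum => j _; apply: bern; lra.
  rewrite sumrB sumr_const card_ord -mulr_suml -natr_sum in h1.
  have hq : 0 < 1 - q by lra.
  rewrite ler_pdivlMr // natrD natrB // /erasures in he.
  rewrite -/q in he.
  rewrite -/q in he.
  lra.
have Y0 : 0 <= Y.
  by apply: sumr_ge0 => j _; apply: exprn_ge0; lra.
rewrite hS hC -(ger0_norm (_ : 0 <= M * Y)); last by apply: mulr_ge0; lra.
rewrite -sqrtr_sqr; apply: ler_wsqrtr.
have -> : 2%:R * (K%:R - 1) * (2%:R^-1 * (M ^+ 2 * Y)) = (K%:R - 1) * (M ^+ 2 * Y) :> R.
  by rewrite mulrCA !mulrA mulVf ?pnatr_eq0 // mul1r.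
have hp : 0 <= M ^+ 2 * Y * (Y - (K%:R - 1)).
  by apply: mulr_ge0; [apply: mulr_ge0; [apply: exprn_ge0; lra | done] | lra].
rewrite exprMn; nra.
Qed.
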